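(* Let $B_1,\dots,B_n$ be independent real-valued service times with finite means $\mu_i$, each with a distribution symmetric around its mean, and put $X_i=B_i-\mu_i$. Fix a sequence $\tau\in\mathsf S_n$ and use the mean-based schedule. Then for each $k\in\{1,\dots,n-1\}$, $W_{k+1}$ is stochastically dominated by $|S_k|$, where $S_k=X_{\tau(1)}+\cdots+X_{\tau(k)}$; consequently $\mathbb EW_{k+1}\le\mathbb E|X_{\tau(1)}+X_{\tau(2)}+\cdots+X_{\tau(k)}|$.
   Context: Under sequence $\tau$ ($\tau(i)$ the patient in slot $i$) and the mean-based schedule (interarrival time after patient $j$ equal to $\mu_j$), the waiting times are $W_1=0$, $W_{i+1}=(W_i+X_{\tau(i)})^+$ with $a^+=\max\{0,a\}$. *)

(* Defs.v *)
From HB Require Import structures.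
From mathcomp Require Import all_boot all_order all_algebra all_fingroup.
From mathcomp Require Import all_classical all_reals all_analysis.
Set Implicit Arguments. Unset Strict Implicit. Unset Printing Implicit Defensive.
Import Order.TTheory GRing.Theory Num.Theory.
Local Open Scope classical_set_scope.
Local Open Scope ring_scope.

Definition mutually_independent d (T : measurableType d) (R : realType)
  (P : probability T R) (n : nat) (B : 'I_n -> T -> R) : Prop :=
  forall (J : {set 'I_n}) (A : 'I_n -> set R),
    (forall i, measurable (A i)) ->
    P (\bigcap_(i in [set j | j \in J]) (B i @^-1` A i)) =
    (\prod_(i in J) P (B i @^-1` A i))%E.

Definition mean d (T : measurableType d) (R : realType) (P : probability T R)
  (Y : T -> R) : R := fine ('E_P[Y])%E.

Definition symmetric_around d (T : measurableType d) (R : realType)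
  (P : probability T R) (Y : T -> R) (m : R) : Prop :=
  forall A : set R, measurable A ->
    P [set w | A (Y w - m)] = P [set w | A (m - Y w)].

(* Lindley recursion, 0-based: lindley x 0 = W_1 = 0,
   lindley x i.+1 = (lindley x i + x i)^+ ; so lindley x k = W_{k+1}
   when x i = X_{tau(i+1)} (paper's 1-based indexing). *)
Fixpoint lindley (R : realType) (x : nat -> R) (i : nat) : R :=
  match i with
  | 0 => 0
  | i'.+1 => Num.max 0 (lindley x i' + x i')
  end.

Definition ord_seq (R : realType) (n : nat) (f : 'I_n -> R) (i : nat) : R :=
  oapp f 0 (insub i).

(* Main.v *)
Require Import Defs.
From HB Require Import structures.
From mathcomp Require Import all_boot all_order all_algebra all_fingroup.
From mathcomp Require Import all_classical all_reals all_analysis.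
From mathcomp Require Import measurable_realfun.
Import Order.TTheory GRing.Theory Num.Theory.
Local Open Scope classical_set_scope.
Local Open Scope ring_scope.
Set Implicit Arguments. Unset Strict Implicit. Unset Printing Implicit Defensive.
From mathcomp Require Import lra.

Section prob.
Context d (T : measurableType d) (R : realType) (P : probability T R).

Definition pr (A : set T) : R := fine (P A).

Lemma prE A : measurable A -> P A = (pr A)%:E.
Proof.
move=> mA; rewrite /pr fineK // ge0_fin_numE ?measure_ge0 //.
exact: (le_lt_trans (probability_le1 P mA) (ltey _)).
Qed.

Lemma pr_ge0 A : measurable A -> 0 <= pr A.
Proof. by move=> mA; rewrite -lee_fin -prE // measure_ge0. Qed.

Lemma pr_le1 A : measurable A -> pr A <= 1.
Proof. by move=> mA; rewrite -lee_fin -prE // probability_le1. Qed.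

Lemma pr_setT : pr setT = 1.
Proof. by rewrite /pr probability_setT. Qed.

Lemma pr_le A C : measurable A -> measurable C -> A `<=` C -> pr A <= pr C.
Proof.
move=> mA mC AC; rewrite -lee_fin -!prE //; apply: le_measure => //; by rewrite inE.
Qed.

Lemma prU A C : measurable A -> measurable C -> A `&` C = set0 ->
  pr (A `|` C) = pr A + pr C.
Proof.
move=> mA mC AC0; apply/eqP; rewrite -(@eqe R) EFinD -!prE //; last exact: measurableU.
by rewrite measureU.
Qed.

Lemma pr_subadd A C : measurable A -> measurable C -> pr (A `|` C) <= pr A + pr C.
Proof.
move=> mA mC; rewrite -lee_fin EFinD -!prE //; last exact: measurableU.
exact: measureU2.
Qed.

End prob.

Section block.
Context d (T : measurableType d) (R : realType) (P : probability T R) (n : nat)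
  (B : 'I_n -> {RV P >-> R}).
Hypothesis indep : mutually_independent P (fun i => B i).

Definition G (J : {set 'I_n}) : set (set T) :=
  [set E | exists A : 'I_n -> set R, (forall i, measurable (A i)) /\
     E = [set w | forall i, i \in J -> A i (B i w)]].

Lemma bigcapE (J : {set 'I_n}) (A : 'I_n -> set R) :
  \bigcap_(i in [set j | j \in J]) (B i @^-1` A i) = [set w | forall i, i \in J -> A i (B i w)].
Proof. by apply/seteqP; split => w /= H i Ji; apply: H. Qed.

Lemma G_meas J : G J `<=` measurable.
Proof.
move=> _ [A [mA ->]]; rewrite -bigcapE; apply: fin_bigcap_measurable.
  exact: finite_finset.
by move=> i _; exact: measurable_funPTI.
Qed.

Lemma G_setI J : setI_closed (G J).
Proof.
move=> _ _ [A [mA ->]] [C [mC ->]]; exists (fun i => A i `&` C i); split.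
  by move=> i; exact: measurableI.
by apply/seteqP; split => w /=; [move=> [H1 H2] i Ji; split; [apply: H1|apply: H2]|
  move=> H; split => i Ji; have [] := H i Ji].
Qed.

Lemma G_setT J : G J setT.
Proof.
exists (fun _ => setT); split => //.
by apply/seteqP; split.
Qed.

Lemma G_indep (J1 J2 : {set 'I_n}) : [disjoint J1 & J2]%B -> forall E F, G J1 E -> G J2 F ->
  P (E `&` F) = (P E * P F)%E.
Proof.
move=> dJ _ _ [A [mA ->]] [C [mC ->]].
pose D i := if i \in J1 then A i else C i.
have mD i : measurable (D i) by rewrite /D; case: ifP.
have -> : [set w | forall i, i \in J1 -> A i (B i w)] `&`
          [set w | forall i, i \in J2 -> C i (B i w)] =
          [set w | forall i, i \in J1 :|: J2 -> D i (B i w)].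
  apply/seteqP; split => w /=.
    move=> [H1 H2] i; rewrite finset.in_setU /D; case: ifP => [Ji _|_ /= Ji]; first exact: H1.
    exact: H2.
  move=> H; split => i Ji.
    by have := H i; rewrite finset.in_setU Ji /D Ji; apply.
  have := H i; rewrite finset.in_setU Ji orbT /D; case: ifP => [Ji1|_]; last by apply.
  by move/disjointFr : dJ => /(_ _ Ji1); rewrite Ji.
have e1 := @indep (J1 :|: J2) D mD; have e2 := @indep J1 A mA; have e3 := @indep J2 C mC.
rewrite !bigcapE in e1 e2 e3; rewrite e1 e2 e3.
rewrite (eq_bigl [predU J1 & J2]); last by move=> i; rewrite finset.in_setU.
rewrite bigU //; congr (_ * _)%E; apply: eq_bigr => i Ji; rewrite /D.
  by rewrite Ji.
case: ifP => // Ji1.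
by move/disjointFr : dJ => /(_ _ Ji1); rewrite Ji.
Qed.

End block.

Section ext.
Context d (T : measurableType d) (R : realType) (P : probability T R) (n : nat)
  (B : 'I_n -> {RV P >-> R}).
Hypothesis indep : mutually_independent P (fun i => B i).

Lemma sigma_indep (J1 J2 : {set 'I_n}) : [disjoint J1 & J2]%B -> forall E F,
  <<s G B J1>> E -> <<s G B J2>> F -> P (E `&` F) = (P E * P F)%E.
Proof.
move=> dJ.
have cover : \bigcup_(k : nat) (setT : set T) = setT.
  by apply/seteqP; split => // w _; exists 0%N.
have step1 F : G B J2 F -> forall E, <<s G B J1>> E -> P (E `&` F) = (P E * P F)%E.
  move=> GF; have mF := G_meas GF.
  pose r : {nonneg R} := NngNum (pr_ge0 P mF).
  move=> E sE.
  have h1 : mrestr P mF E = mscale r P E.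
    apply: (@g_sigma_algebra_measure_unique _ _ _ (G B J1) (G_meas (B:=B) (J:=J1))
     (fun _ => setT) (fun _ => G_setT B J1) cover (mrestr P mF) (mscale r P) (@G_setI _ _ _ _ _ B J1)
     _ _ E sE).
    - move=> A GA /=; rewrite /mrestr /mscale /=.
      by rewrite (G_indep indep dJ GA GF) muleC -prE.
    - by move=> _; change (P (setT `&` F) < +oo)%E; rewrite setTI prE ?ltry.
  have h2 : P (E `&` F) = ((fine (P F))%:E * P E)%E := h1.
  by rewrite h2 -prE // muleC.
move=> E F sE sF.
have mE : measurable E.
  by apply: (smallest_sub (@sigma_algebra_measurable _ T) (G_meas (B:=B) (J:=J1))).
pose r : {nonneg R} := NngNum (pr_ge0 P mE).
have h1 : mrestr P mE F = mscale r P F.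
  apply: (@g_sigma_algebra_measure_unique _ _ _ (G B J2) (G_meas (B:=B) (J:=J2))
   (fun _ => setT) (fun _ => G_setT B J2) cover (mrestr P mE) (mscale r P) (@G_setI _ _ _ _ _ B J2)
   _ _ F sF).
  - move=> A GA /=; rewrite /mrestr /mscale /=.
    by rewrite setIC (step1 A GA E sE) -prE.
  - by move=> _; change (P (setT `&` E) < +oo)%E; rewrite setTI prE ?ltry.
have h2 : P (F `&` E) = ((fine (P E))%:E * P F)%E := h1.
by rewrite setIC h2 -prE.
Qed.
End ext.

Section sym.
Context d (T : measurableType d) (R : realType) (P : probability T R).

Definition sym (f : T -> R) := forall A : set R, measurable A ->
  P (f @^-1` A) = P ((fun w => - f w) @^-1` A).

Lemma sym_add (U V : T -> R) : measurable_fun setT U -> measurable_fun setT V ->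
  (forall A C, measurable A -> measurable C ->
     P (U @^-1` A `&` V @^-1` C) = (P (U @^-1` A) * P (V @^-1` C))%E) ->
  sym U -> sym V -> sym (fun w => U w + V w).
Proof.
move=> mU mV ind sU sV.
have mopp : measurable_fun setT (fun x : R => - x) by apply: measurable_funN.
have mN (A : set R) : measurable A -> measurable ((fun x : R => - x) @^-1` A).
  by move=> mA; rewrite -[X in measurable X]setTI; exact: mopp.
have NN (f : T -> R) (A : set R) : (fun w => - f w) @^-1` ((fun x : R => - x) @^-1` A) = f @^-1` A.
  by apply/seteqP; split => w /=; rewrite opprK.
have mf : measurable_fun setT (fun w => (U w, V w)) by apply: measurable_fun_pair.
have mg : measurable_fun setT (fun w => (- U w, - V w)).
  by apply: measurable_fun_pair; apply: measurable_funN.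
pose m1 : {measure set (R * R)%type -> \bar R} := pushforward P (fun w => (U w, V w)).
pose m2 : {measure set (R * R)%type -> \bar R} := pushforward P (fun w => (- U w, - V w)).
have key : forall S, measurable S -> m1 mf S = m2 mg S.
  move=> S mS.
  apply: (measure_unique [set A `*` C | A in measurable & C in measurable] (fun _ => setT)) => //.
  - exact: measurable_prod_measurableType.
  - move=> _ _ [A mA [C mC <-]] [A' mA' [C' mC' <-]]; rewrite -setXI.
    by exists (A `&` A'); [exact: measurableI|exists (C `&` C') => //; exact: measurableI].
  - by move=> _; exists setT => //; exists setT => //; rewrite setXTT.
  - by apply/seteqP; split => // w _; exists 0%N.
  - move=> _ [A mA [C mC <-]].
    change (P (U @^-1` A `&` V @^-1` C) = P ((fun w => - U w) @^-1` A `&` (fun w => - V w) @^-1` C)).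
    rewrite ind // (sU A mA) (sV C mC).
    change ((P ((fun w => (- U w)%R) @^-1` A) * P ((fun w => (- V w)%R) @^-1` C))%E =
      P (U @^-1` ((fun x : R => - x) @^-1` A) `&` V @^-1` ((fun x : R => - x) @^-1` C))).
    by rewrite ind; try exact: mN.
  - by move=> _; change (P setT < +oo)%E; rewrite probability_setT ltry.
move=> A mA.
have mS : measurable [set p : R * R | A (p.1 + p.2)].
  have h : measurable_fun setT (fun p : R * R => p.1 + p.2).
    by apply: measurable_funD; [exact: measurable_fst | exact: measurable_snd].
  by rewrite -[X in measurable X]setTI; exact: h.
have := key _ mS.
change (P [set w | A (U w + V w)] = P [set w | A (- U w + - V w)] ->
  P [set w | A (U w + V w)] = P [set w | A (- (U w + V w))]).
by under [X in _ -> _ = P X]eq_set => w do rewrite opprD.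
Qed.
End sym.

Section ymeas.
Context d (T : measurableType d) (R : realType) (P : probability T R) (n : nat)
  (B : 'I_n -> {RV P >-> R}) (tau : 'S_n) (c : 'I_n -> R).

Definition y (i : nat) (w : T) : R := ord_seq (fun j => B (tau j) w - c (tau j)) i.

Definition Jb (a b : nat) : {set 'I_n} := finset (fun m : 'I_n => (a <= (tau^-1)%g m < b)%N).

Lemma mem_Jb a b (o0 : 'I_n) : (tau o0 \in Jb a b) = (a <= o0 < b)%N.
Proof. by rewrite /Jb inE permK. Qed.

Lemma Jb_disj a b e : [disjoint Jb a b & Jb b e]%B.
Proof.
apply/pred0P => m /=; rewrite /Jb !inE.
by case/boolP: (a <= (tau^-1)%g m < b)%N => //= /andP[_ h]; rewrite leqNgt h.
Qed.

Lemma sub_meas (J : {set 'I_n}) (f : T -> R) :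
  measurable_fun [set: g_sigma_algebraType (G B J)] f -> measurable_fun [set: T] f.
Proof.
move=> mf _ Y mY.
have := mf measurableT Y mY.
by apply: (smallest_sub (@sigma_algebra_measurable _ T) (G_meas (B:=B) (J:=J))).
Qed.

Lemma B_meas (J : {set 'I_n}) m : m \in J ->
  measurable_fun [set: g_sigma_algebraType (G B J)] (B m : T -> R).
Proof.
move=> mJ _ Y mY; apply: sub_sigma_algebra.
exists (fun j => if j == m then Y else setT); split.
  by move=> j; case: ifP.
apply/seteqP; split => w /=.
  by move=> [_ Yw] j _; case: ifP => // /eqP ->.
by move=> h; split => //; have := h m mJ; rewrite eqxx.
Qed.

Lemma y_meas a b i : (a <= i < b)%N ->
  measurable_fun [set: g_sigma_algebraType (G B (Jb a b))] (y i).
Proof.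
move=> hi; rewrite /y /ord_seq; case: insubP => [ii _ oi | _] /=.
  apply: measurable_funB; last exact: measurable_cst.
  by apply: B_meas; rewrite mem_Jb oi.
exact: measurable_cst.
Qed.

Lemma sum_meas a b j1 j2 : (a <= j1)%N -> (j2 <= b)%N ->
  measurable_fun [set: g_sigma_algebraType (G B (Jb a b))]
    (fun w => \sum_(j1 <= i < j2) y i w).
Proof.
move=> h1 h2.
have -> : (fun w => \sum_(j1 <= i < j2) y i w) =
   (fun w => \sum_(i <- index_iota j1 j2) (fun i => if (j1 <= i < j2)%N then y i else (fun _ => 0)) i w).
  apply/funext => w; apply: eq_big_nat => i hi.
  by rewrite hi.
apply: measurable_sum => i /=; case: ifP => hi; last exact: measurable_cst.
apply: y_meas; case/andP: hi => hi1 hi2; apply/andP; split.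
  exact: leq_trans h1 hi1.
exact: leq_trans hi2 h2.
Qed.

End ymeas.

Section symD.
Context d (T : measurableType d) (R : realType) (P : probability T R) (n : nat)
  (B : 'I_n -> {RV P >-> R}) (tau : 'S_n) (c : 'I_n -> R).
Hypothesis indep : mutually_independent P (fun i => B i).
Hypothesis symB : forall i, symmetric_around P (B i) (c i).

Local Notation y := (y B tau c).

Definition Dsum j w := \sum_(0 <= i < j) y i w.

Lemma meas_set (J : {set 'I_n}) (f : T -> R) (A : set R) :
  measurable_fun [set: g_sigma_algebraType (G B J)] f -> measurable A ->
  <<s G B J>> (f @^-1` A).
Proof. by move=> mf mA; have := mf measurableT A mA; rewrite setTI. Qed.

Lemma sym_y i : sym P (y i).
Proof.
move=> A mA; rewrite /y /ord_seq; case: insubP => [ii _ _|_] /=.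
  have h := symB (tau ii) mA.
  rewrite [X in _ = P X](_ : _ = [set w | A (c (tau ii) - B (tau ii) w)]); first exact: h.
  by apply/seteqP; split => w /=; rewrite opprB.
by congr (P _); apply/seteqP; split => w /=; rewrite oppr0.
Qed.

Lemma sym_D j : sym P (Dsum j).
Proof.
elim: j => [|j IH].
  move=> A mA; congr (P _); apply/seteqP; split => w /=; by rewrite /Dsum big_geq // oppr0.
have -> : Dsum j.+1 = fun w => Dsum j w + y j w.
  by apply/funext => w; rewrite /Dsum big_nat_recr.
apply: sym_add => //.
- exact: (sub_meas (@sum_meas _ _ _ _ _ B tau c 0 j 0 j (leqnn 0) (leqnn j))).
- apply: (sub_meas (@y_meas _ _ _ _ _ B tau c j j.+1 j _)).
  by rewrite leqnn ltnSn.
- move=> A C mA mC; apply: (sigma_indep indep (Jb_disj tau 0 j j.+1)).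
    by apply: meas_set => //; exact: (@sum_meas _ _ _ _ _ B tau c 0 j 0 j (leqnn 0) (leqnn j)).
  by apply: meas_set => //; apply: (@y_meas _ _ _ _ _ B tau c j j.+1 j); rewrite leqnn ltnSn.
- exact: sym_y.
Qed.

End symD.

Section levy.
Context d (T : measurableType d) (R : realType) (P : probability T R) (n : nat)
  (B : 'I_n -> {RV P >-> R}) (tau : 'S_n) (c : 'I_n -> R).
Hypothesis indep : mutually_independent P (fun i => B i).
Hypothesis symB : forall i, symmetric_around P (B i) (c i).

Local Notation y := (y B tau c).
Local Notation Dsum := (Dsum B tau c).
Local Notation TJ J := (g_sigma_algebraType (G B J)).

Lemma sig_meas J X : <<s G B J>> X -> measurable X.
Proof. exact: (smallest_sub (@sigma_algebra_measurable _ T) (G_meas (B:=B) (J:=J))). Qed.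

Lemma lt_set J (f : T -> R) t : measurable_fun [set: TJ J] f -> <<s G B J>> [set w | t < f w].
Proof.
move=> mf; have -> : [set w | t < f w] = f @^-1` `]t, +oo[.
  by apply/seteqP; split => w /=; rewrite in_itv /= andbT.
by apply: meas_set => //; exact: measurable_itv.
Qed.

Lemma ge_set J (f : T -> R) t : measurable_fun [set: TJ J] f -> <<s G B J>> [set w | t <= f w].
Proof.
move=> mf; have -> : [set w | t <= f w] = f @^-1` `[t, +oo[.
  by apply/seteqP; split => w /=; rewrite in_itv /= andbT.
by apply: meas_set => //; exact: measurable_itv.
Qed.

Lemma le_set J (f : T -> R) t : measurable_fun [set: TJ J] f -> <<s G B J>> [set w | f w <= t].
Proof.
move=> mf; have -> : [set w | f w <= t] = f @^-1` `]-oo, t].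
  by apply/seteqP; split => w /=; rewrite in_itv /=.
by apply: meas_set => //; exact: measurable_itv.
Qed.

Lemma pr_indep (A C : set T) : measurable A -> measurable C ->
  P (A `&` C) = (P A * P C)%E -> pr P (A `&` C) = pr P A * pr P C.
Proof. by move=> mA mC h; rewrite /pr h (prE P mA) (prE P mC). Qed.

Variables (k : nat) (t : R).
Hypothesis t0 : 0 <= t.

Definition s j w := \sum_(j <= i < k) y i w.
Definition F j := [set w | exists2 j', (j <= j' < k)%N & t < s j' w].
Definition Sk := [set w | t < Dsum k w].

Lemma F_rec j : (j < k)%N -> F j = [set w | t < s j w] `|` F j.+1.
Proof.
move=> jk; apply/seteqP; split => w /=.
  move=> [j' /andP[h1 h2] h3]; rewrite leq_eqVlt in h1; case/orP: h1 => [/eqP ej|h1].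
    by left; rewrite ej.
  by right; exists j' => //; rewrite h1 h2.
move=> [h|[j' /andP[h1 h2] h3]]; first by exists j => //; rewrite leqnn jk.
by exists j' => //; rewrite (ltnW h1) h2.
Qed.

Lemma F_ge j : (k <= j)%N -> F j = set0.
Proof.
move=> kj; apply/seteqP; split => w //= [j' /andP[h1 h2] _].
by have := leq_trans kj h1; rewrite leqNgt h2.
Qed.

Lemma F_meas a j : (a <= j)%N -> <<s G B (Jb tau a k)>> (F j).
Proof.
move: {2}(k - j)%N (erefl (k - j)%N) => m; elim: m j => [|m IH] j km aj.
  rewrite F_ge; first exact: (@measurable0 _ (TJ (Jb tau a k))).
  by rewrite -subn_eq0 km.
have jk : (j < k)%N by rewrite -subn_gt0 km.
rewrite F_rec //; apply: (@measurableU _ (TJ (Jb tau a k))).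
  by apply: lt_set; apply: (@sum_meas _ _ _ _ _ B tau c a k j k aj (leqnn k)).
by apply: IH; [rewrite subnS km | exact: leqW].
Qed.

End levy.

Section levy2.
Context d (T : measurableType d) (R : realType) (P : probability T R) (n : nat)
  (B : 'I_n -> {RV P >-> R}) (tau : 'S_n) (c : 'I_n -> R).
Hypothesis indep : mutually_independent P (fun i => B i).
Hypothesis symB : forall i, symmetric_around P (B i) (c i).
Variables (k : nat) (t : R).
Hypothesis t0 : 0 <= t.

Local Notation y := (y B tau c).
Local Notation Dsum := (Dsum B tau c).
Local Notation TJ J := (g_sigma_algebraType (G B J)).
Local Notation s := (s B tau c k).
Local Notation F := (F B tau c k t).
Local Notation Sk := (Sk B tau c k t).

Lemma mF j : measurable (F j).
Proof. exact: (sig_meas (F_meas c t (a:=0) (j:=j) (leq0n j))). Qed.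

Lemma mD j : measurable_fun [set: T] (Dsum j).
Proof. exact: (sub_meas (@sum_meas _ _ _ _ _ B tau c 0 j 0 j (leqnn 0) (leqnn j))). Qed.

Lemma mSk : measurable Sk.
Proof.
exact: (sig_meas (lt_set t (@sum_meas _ _ _ _ _ B tau c 0 k 0 k (leqnn 0) (leqnn k)))).
Qed.

Lemma half_Dp j : 1 / 2 <= pr P [set w | 0 <= Dsum j w].
Proof.
have mDp : measurable [set w | 0 <= Dsum j w].
  exact: (sig_meas (ge_set 0 (@sum_meas _ _ _ _ _ B tau c 0 j 0 j (leqnn 0) (leqnn j)))).
have mDm : measurable [set w | Dsum j w <= 0].
  exact: (sig_meas (le_set 0 (@sum_meas _ _ _ _ _ B tau c 0 j 0 j (leqnn 0) (leqnn j)))).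
have e : pr P [set w | 0 <= Dsum j w] = pr P [set w | Dsum j w <= 0].
  have := sym_D tau indep symB j (measurable_itv `[0, +oo[).
  rewrite /pr => h.
  have -> : [set w | 0 <= Dsum j w] = Dsum j @^-1` `[0, +oo[.
    by apply/seteqP; split => w /=; rewrite in_itv /= andbT.
  rewrite h; congr (fine (P _)).
  by apply/seteqP; split => w /=; rewrite in_itv /= andbT oppr_ge0.
have h1 : pr P setT <= pr P ([set w | 0 <= Dsum j w] `|` [set w | Dsum j w <= 0]).
  apply: pr_le => //; first exact: measurableU.
  by move=> w _ /=; case: (lerP 0 (Dsum j w)) => h; [left|right; exact: ltW].
have h2 := pr_subadd P mDp mDm.
rewrite pr_setT in h1; lra.
Qed.

Lemma levy_core j : (j < k)%N ->
  pr P ([set w | t < s j w] `\` F j.+1) <=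
  2 * pr P (([set w | t < s j w] `\` F j.+1) `&` Sk).
Proof.
move=> jk.
set E := [set w | t < s j w] `\` F j.+1.
have sE : <<s G B (Jb tau j k)>> E.
  apply: (@measurableD _ (TJ (Jb tau j k))).
    by apply: lt_set; exact: (@sum_meas _ _ _ _ _ B tau c j k j k (leqnn j) (leqnn k)).
  by apply: F_meas; exact: leqnSn.
have mE := sig_meas sE.
set Dp := [set w | 0 <= Dsum j w].
have sDp : <<s G B (Jb tau 0 j)>> Dp.
  by apply: ge_set; exact: (@sum_meas _ _ _ _ _ B tau c 0 j 0 j (leqnn 0) (leqnn j)).
have mDp := sig_meas sDp.
have hind : pr P (Dp `&` E) = pr P Dp * pr P E.
  by apply: pr_indep => //; exact: (sigma_indep indep (Jb_disj tau 0 j k)).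
have hsub : pr P (Dp `&` E) <= pr P (E `&` Sk).
  apply: pr_le; [exact: measurableI|apply: measurableI => //; exact: mSk|].
  move=> w [hD hE]; split => //; have [hs _] := hE.
  rewrite /Sk /= /Dsum (@big_cat_nat _ _ _ j) //=; last exact: ltnW.
  have h1 : 0 <= Dsum j w := hD; have h2 : t < s j w := hs.
  rewrite /Dsum /s in h1 h2; lra.
have := half_Dp j; have := pr_ge0 P mE; have := pr_ge0 P mDp.
rewrite -/Dp; nra.
Qed.

End levy2.

Section levy3.
Context d (T : measurableType d) (R : realType) (P : probability T R) (n : nat)
  (B : 'I_n -> {RV P >-> R}) (tau : 'S_n) (c : 'I_n -> R).
Hypothesis indep : mutually_independent P (fun i => B i).
Hypothesis symB : forall i, symmetric_around P (B i) (c i).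
Variables (k : nat) (t : R).
Hypothesis t0 : 0 <= t.

Local Notation y := (y B tau c).
Local Notation Dsum := (Dsum B tau c).
Local Notation s := (s B tau c k).
Local Notation F := (F B tau c k t).
Local Notation Sk := (Sk B tau c k t).

Lemma levy_step j : (j <= k)%N -> pr P (F j) <= 2 * pr P (F j `&` Sk).
Proof.
move: {2}(k - j)%N (erefl (k - j)%N) => m; elim: m j => [|m IH] j km jk.
  rewrite F_ge; last by rewrite -subn_eq0 km.
  by rewrite set0I /pr measure0 /= mulr0.
have jk' : (j < k)%N by rewrite -subn_gt0 km.
set X := [set w | t < s j w].
set E := X `\` F j.+1.
have mX : measurable X.
  exact: (sig_meas (lt_set t (@sum_meas _ _ _ _ _ B tau c j k j k (leqnn j) (leqnn k)))).
have mF1 := mF B tau c k t j.+1.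
have mE : measurable E by exact: measurableD.
have eF : F j = E `|` F j.+1.
  rewrite F_rec //; apply/seteqP; split => w /=.
    by case=> h; [have [h'|h'] := pselect (F j.+1 w); [right|left]|right].
  by case=> [[h _]|h]; [left|right].
have dEF : E `&` F j.+1 = set0 by rewrite setDKI.
have hc := @levy_core _ _ _ _ _ B tau c indep symB k t j jk'.
have IH' := IH j.+1 ltac:(by rewrite subnS km) jk'.
have mS := mSk B tau c k t.
have e1 : pr P (F j) = pr P E + pr P (F j.+1) by rewrite eF prU.
have e2 : pr P (F j `&` Sk) = pr P (E `&` Sk) + pr P (F j.+1 `&` Sk).
  rewrite eF setIUl prU //; try exact: measurableI.
  by apply/seteqP; split => w // [[h1 _] [h2 _]]; rewrite -dEF; split.
rewrite e1 e2; rewrite -/X -/E in hc; lra.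
Qed.

End levy3.

Lemma lindley_iff (R : realType) (x : nat -> R) kk t0 : t0 < lindley x kk <->
  t0 < 0 \/ exists2 j, (j < kk)%N & t0 < \sum_(j <= i < kk) x i.
Proof.
elim: kk t0 => [|kk IH] t0 /=.
  by split; [left|case => //; case].
rewrite lt_max; split.
  case/orP => [h|]; first by left.
  rewrite -ltrBlDr => /IH [h|[j jk h]].
    by right; exists kk => //; rewrite big_nat1; lra.
  right; exists j; first exact: ltnW.
  by rewrite big_nat_recr /= ?(ltnW jk) //; lra.
case=> [h|[j jk h]]; first by rewrite h.
apply/orP; right; rewrite -ltrBlDr; apply/IH.
rewrite ltnS leq_eqVlt in jk; case/orP: jk => [/eqP ej|jk].
  by left; rewrite ej big_nat1 in h; lra.
by right; exists j => //; rewrite big_nat_recr /= ?(ltnW jk) // in h; lra.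
Qed.

Section tail.
Context d (T : measurableType d) (R : realType) (P : probability T R) (n : nat)
  (B : 'I_n -> {RV P >-> R}) (tau : 'S_n) (c : 'I_n -> R).
Hypothesis indep : mutually_independent P (fun i => B i).
Hypothesis symB : forall i, symmetric_around P (B i) (c i).

Local Notation y := (y B tau c).
Local Notation Dsum := (Dsum B tau c).

Lemma my i : measurable_fun [set: T] (y i).
Proof.
apply: (sub_meas (@y_meas _ _ _ _ _ B tau c i i.+1 i _)).
by rewrite leqnn ltnSn.
Qed.

Lemma mW k : measurable_fun [set: T] (fun w => lindley (fun i => y i w) k).
Proof.
elim: k => [|k IH] /=; first exact: measurable_cst.
apply: measurable_maxr; first exact: measurable_cst.
by apply: measurable_funD => //; exact: my.
Qed.

Lemma mabsD k : measurable_fun [set: T] (fun w => `|Dsum k w|).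
Proof. apply: measurableT_comp => //; exact: mD. Qed.

Lemma tail_ineq k t : (P [set w | (t < lindley (fun i => y i w) k)%R] <=
  P [set w | (t < `|Dsum k w|)%R])%E.
Proof.
have mL : measurable [set w | t < lindley (fun i => y i w) k].
  have -> : [set w | t < lindley (fun i => y i w) k] =
      (fun w => lindley (fun i => y i w) k) @^-1` `]t, +oo[.
    by apply/seteqP; split => w /=; rewrite in_itv /= andbT.
  by rewrite -[X in measurable X]setTI; apply: mW => //; exact: measurable_itv.
have [tn|t0] := ltP t 0.
  have -> : [set w | t < `|Dsum k w|] = setT.
    by apply/seteqP; split => // w _ /=; apply: (lt_le_trans tn).
  by rewrite probability_setT probability_le1.
have mS := mSk B tau c k t.
have mN : measurable [set w | t < - Dsum k w].
  have -> : [set w | t < - Dsum k w] = (fun w => - Dsum k w) @^-1` `]t, +oo[.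
    by apply/seteqP; split => w /=; rewrite in_itv /= andbT.
  rewrite -[X in measurable X]setTI; apply: (measurable_funN (mD B tau c k)) => //; exact: measurable_itv.
have eL : [set w | t < lindley (fun i => y i w) k] = F B tau c k t 0.
  apply/seteqP; split => w /=.
    by move/lindley_iff => [h|[j jk h]]; [lra|exists j].
  by move=> [j /andP[_ jk] h]; apply/lindley_iff; right; exists j.
have eA : [set w | t < `|Dsum k w|] = Sk B tau c k t `|` [set w | t < - Dsum k w].
  by apply/seteqP; split => w /=; rewrite ltr_normr => /orP.
have mF0 := mF B tau c k t 0.
have hs := @levy_step _ _ _ _ _ B tau c indep symB k t 0 (leq0n k).
have h1 : pr P (F B tau c k t 0 `&` Sk B tau c k t) <= pr P (Sk B tau c k t).
  by apply: pr_le => //; exact: measurableI.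
have eN : pr P [set w | t < - Dsum k w] = pr P (Sk B tau c k t).
  have h := sym_D tau indep symB k (measurable_itv `]t, +oo[).
  rewrite /pr /Sk.
  have -> : [set w | t < Dsum k w] = Dsum k @^-1` `]t, +oo[.
    by apply/seteqP; split => w /=; rewrite in_itv /= andbT.
  rewrite h; congr (fine (P _)).
  by apply/seteqP; split => w /=; rewrite in_itv /= andbT.
have dj : Sk B tau c k t `&` [set w | t < - Dsum k w] = set0.
  apply/seteqP; split => // w [h2 h3]; rewrite /Sk /= in h2 h3; lra.
rewrite eL eA (prE P mF0) prE; last exact: measurableU.
rewrite lee_fin prU //; lra.
Qed.
End tail.

Section expe.
Context d (T : measurableType d) (R : realType) (P : probability T R).

Lemma exp_le (X1 X2 : T -> R) : measurable_fun setT X1 -> measurable_fun setT X2 ->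
  (forall w, 0 <= X1 w) -> (forall w, 0 <= X2 w) ->
  (forall t, (P [set w | (t < X1 w)%R] <= P [set w | (t < X2 w)%R])%E) ->
  ('E_P[X1] <= 'E_P[X2])%E.
Proof.
move=> m1 m2 h1 h2 ht.
pose Y1 : {RV P >-> R} := MeasurableFun.Pack (MeasurableFun.Class (isMeasurableFun.Build _ _ _ _ X1 m1)).
pose Y2 : {RV P >-> R} := MeasurableFun.Pack (MeasurableFun.Class (isMeasurableFun.Build _ _ _ _ X2 m2)).
have -> : ('E_P[X1] = 'E_P[Y1])%E by [].
have -> : ('E_P[X2] = 'E_P[Y2])%E by [].
rewrite (@ge0_expectation_ccdf _ _ _ P Y1 h1) (@ge0_expectation_ccdf _ _ _ P Y2 h2).
apply: ge0_le_integral => //.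
- exact: measurable_funTS (ccdf_measurable _).
- exact: measurable_funTS (ccdf_measurable _).
- move=> r _; rewrite /ccdf /distribution /pushforward.
  have := ht r.
  have -> : [set w | (r < X1 w)%R] = Y1 @^-1` `]r, +oo[.
    by apply/seteqP; split => w /=; rewrite in_itv /= andbT.
  have -> : [set w | (r < X2 w)%R] = Y2 @^-1` `]r, +oo[.
    by apply/seteqP; split => w /=; rewrite in_itv /= andbT.
  by [].
Qed.
End expe.

Lemma lindley_ge0 (R : realType) (x : nat -> R) k : 0 <= lindley x k.
Proof. by case: k => [|k] //=; rewrite le_max lexx. Qed.

Lemma S_eq d (T : measurableType d) (R : realType) (P : probability T R) (n : nat)
  (B : 'I_n -> {RV P >-> R}) (tau : 'S_n) (c : 'I_n -> R) k w : (k <= n)%N ->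
  \sum_(j < n | (j < k)%N) (B (tau j) w - c (tau j)) = Dsum B tau c k w.
Proof.
move=> kn; rewrite /Dsum (big_nat_widen 0 k n) // big_mkord.
by apply: eq_big => // j; rewrite /y /ord_seq valK.
Qed.

Unset Implicit Arguments.
Theorem lemma3p2 (d : measure_display) (T : measurableType d) (R : realType)
  (P : probability T R) (n : nat) (B : 'I_n -> {RV P >-> R})
  (tau : 'S_n) :
  mutually_independent P (fun i => B i) ->
  (forall i, P.-integrable setT (EFin \o B i)) ->
  (forall i, symmetric_around P (B i) (mean P (B i))) ->
  let X := fun (i : 'I_n) (w : T) => B i w - mean P (B i) in
  let W := fun (k : nat) (w : T) => lindley (ord_seq (fun j => X (tau j) w)) k in
  let S := fun (k : nat) (w : T) => \sum_(j < n | (j < k)%N) X (tau j) w in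
  forall k : nat, (1 <= k <= n - 1)%N ->
    (forall t : R, P [set w | (t < W k w)%R] <= P [set w | (t < `|S k w|)%R])%E /\
    ('E_P[W k] <= 'E_P[fun w => `|S k w|%R])%E.
Proof.
move=> indep _ symm X W S k /andP[_ hk].
pose c := fun i => mean P (B i).
have kn : (k <= n)%N by apply: (leq_trans hk); exact: leq_subr.
have eS : forall w, S k w = Dsum B tau c k w by move=> w; exact: S_eq.
have eSs : forall t : R, [set w | (t < `|S k w|)%R] = [set w | (t < `|Dsum B tau c k w|)%R].
  by move=> t; apply/seteqP; split => w /=; rewrite eS.
have tl : forall t : R, (P [set w | (t < W k w)%R] <= P [set w | (t < `|S k w|)%R])%E.
  by move=> t; rewrite eSs; exact: (@tail_ineq d T R P n B tau c indep symm k t).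
split => //.
apply: exp_le => //.
- exact: (@mW d T R P n B tau c k).
- have -> : (fun w => `|S k w|) = (fun w => `|Dsum B tau c k w|).
    by apply/funext => w; rewrite eS.
  exact: (@mabsD d T R P n B tau c k).
- by move=> w; exact: lindley_ge0.
Qed.
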